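(* Let $\mathcal{R}\colon\mathbf{Mod}_{\mathbb{R}_{\geq0}}\to\mathbf{Vect}_{\mathbb{R}}$ be a left adjoint to the forgetful functor $\mathbf{Vect}_{\mathbb{R}}\to\mathbf{Mod}_{\mathbb{R}_{\geq0}}$ (restriction of scalars along $\mathbb{R}_{\geq0}\hookrightarrow\mathbb{R}$), and let $\mathcal{C}\colon\mathbf{Vect}_{\mathbb{R}}\to\mathbf{Vect}_{\mathbb{C}}$ be a left adjoint to the forgetful functor $\mathbf{Vect}_{\mathbb{C}}\to\mathbf{Vect}_{\mathbb{R}}$ (restriction of scalars along $\mathbb{R}\hookrightarrow\mathbb{C}$). For a finite-dimensional complex Hilbert space $H$, the transpose under the first adjunction of the inclusion $\mathcal{Pos}(H)\hookrightarrow\mathcal{SA}(H)$ (a map in $\mathbf{Mod}_{\mathbb{R}_{\geq0}}$) is an isomorphism $\mathcal{R}(\mathcal{Pos}(H))\cong\mathcal{SA}(H)$ in $\mathbf{Vect}_{\mathbb{R}}$, and the transpose under the second adjunction of the inclusion $\mathcal{SA}(H)\hookrightarrow\mathcal{B}(H)$ (a map in $\mathbf{Vect}_{\mathbb{R}}$) is an isomorphism $\mathcal{C}(\mathcal{SA}(H))\cong\mathcal{B}(H)$ in $\mathbf{Vect}_{\mathbb{C}}$. Consequently $\mathcal{R}\circ\mathcal{Pos}\cong\mathcal{SA}$ and $\mathcal{C}\circ\mathcal{SA}\cong\mathcal{B}$ as functors on $\mathbf{FdHilb}$.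
   Context: For a finite-dimensional complex Hilbert space $H$: $\mathcal{B}(H)$ is the complex vector space of linear operators $H\to H$; $\mathcal{SA}(H)\subseteq\mathcal{B}(H)$ is the real vector space of self-adjoint operators ($A^\dagger=A$); $\mathcal{Pos}(H)\subseteq\mathcal{SA}(H)$ is the $\mathbb{R}_{\geq0}$-module of positive operators ($\langle Ax,x\rangle\ge0$ for all $x$). $\mathbf{FdHilb}$ is the category of finite-dimensional complex Hilbert spaces and linear maps, and $\mathcal{B},\mathcal{SA},\mathcal{Pos}$ are functors from it (to $\mathbf{Vect}_{\mathbb{C}}$, $\mathbf{Vect}_{\mathbb{R}}$, $\mathbf{Mod}_{\mathbb{R}_{\ge0}}$ respectively) sending $C\colon H\to K$ to $A\mapsto CAC^{\dagger}$. $\mathbf{Mod}_{\mathbb{R}_{\geq0}}$ is the category of modules over the semiring $\mathbb{R}_{\geq0}$ (commutative monoids with a scalar multiplication by non-negative reals that is additive in each argument, unital and associative) with linear maps; $\mathbf{Vect}_{\mathbb{R}}$, $\mathbf{Vect}_{\mathbb{C}}$ are the categories of real, resp. complex, vector spaces. *)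

(* Defs.v *)
From HB Require Import structures.
From mathcomp Require Import all_boot all_order all_algebra.
From mathcomp Require Import reals.
From mathcomp Require Import complex.
Set Implicit Arguments. Unset Strict Implicit. Unset Printing Implicit Defensive.
Import Order.TTheory GRing.Theory Num.Theory.
Local Open Scope ring_scope.

Section Defs.
Variable R : realType.
Local Notation C := R[i].

Local Notation rC := (real_complex R).

(** conjugate transpose (Hilbert-space adjoint for the standard inner product on C^n) *)
Definition adjmx m n (A : 'M[C]_(m, n)) : 'M[C]_(n, m) := (map_mx Num.conj A)^T.

Definition hermitian n (A : 'M[C]_n) : bool := adjmx A == A.

Definition posmx n (A : 'M[C]_n) : Prop :=
  forall x : 'cV[C]_n, 0 <= (adjmx x *m A *m x) 0 0.

Lemma adjmxD m n (A B : 'M[C]_(m, n)) : adjmx (A + B) = adjmx A + adjmx B.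
Proof. by rewrite /adjmx map_mxD linearD. Qed.
Lemma adjmxN m n (A : 'M[C]_(m, n)) : adjmx (- A) = - adjmx A.
Proof. by rewrite /adjmx map_mxN linearN. Qed.
Lemma adjmx0 m n : adjmx (0 : 'M[C]_(m, n)) = 0.
Proof. by rewrite /adjmx map_mx0 linear0. Qed.
Lemma conj_rC (r : R) : Num.conj (rC r) = rC r.
Proof. exact: conjc_real. Qed.
Lemma adjmxZr m n r (A : 'M[C]_(m, n)) : adjmx (rC r *: A) = rC r *: adjmx A.
Proof.
by apply/matrixP=> i j; rewrite /adjmx !mxE rmorphM /= conj_rC.
Qed.
Lemma adjmxK m n (A : 'M[C]_(m, n)) : adjmx (adjmx A) = A.
Proof. by apply/matrixP=> i j; rewrite /adjmx !mxE conjCK. Qed.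
Lemma adjmxM m n p (A : 'M[C]_(m, n)) (B : 'M[C]_(n, p)) :
  adjmx (A *m B) = adjmx B *m adjmx A.
Proof. by rewrite /adjmx map_mxM trmx_mul. Qed.

(** The real vector space SA(H) of self-adjoint operators on H = C^n. *)
Record SAmx (n : nat) := SAmk { sa_val :> 'M[C]_n; sa_herm : hermitian sa_val }.

Section SA.
Variable n : nat.
HB.instance Definition _ := [isSub for @sa_val n].
HB.instance Definition _ := [Equality of SAmx n by <:].
HB.instance Definition _ := [Choice of SAmx n by <:].

Lemma herm0 : hermitian (0 : 'M[C]_n).
Proof. by rewrite /hermitian adjmx0. Qed.
Lemma hermD (A B : SAmx n) : hermitian (sa_val A + sa_val B).
Proof. by rewrite /hermitian adjmxD (eqP (sa_herm A)) (eqP (sa_herm B)). Qed.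
Lemma hermN (A : SAmx n) : hermitian (- sa_val A).
Proof. by rewrite /hermitian adjmxN (eqP (sa_herm A)). Qed.
Lemma hermZ r (A : SAmx n) : hermitian (rC r *: sa_val A).
Proof. by rewrite /hermitian adjmxZr (eqP (sa_herm A)). Qed.

Definition sa0 := SAmk herm0.
Definition saD A B := SAmk (hermD A B).
Definition saN A := SAmk (hermN A).
Definition saZ r A := SAmk (hermZ r A).

Lemma saDA : associative saD.
Proof. by move=> a b c; apply: val_inj; rewrite /= addrA. Qed.
Lemma saDC : commutative saD.
Proof. by move=> a b; apply: val_inj; rewrite /= addrC. Qed.
Lemma sa0D : left_id sa0 saD.
Proof. by move=> a; apply: val_inj; rewrite /= add0r. Qed.
Lemma saND : left_inverse sa0 saN saD.
Proof. by move=> a; apply: val_inj; rewrite /= addNr. Qed.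

HB.instance Definition _ := GRing.isZmodule.Build (SAmx n) saDA saDC sa0D saND.

Lemma saZA a b v : saZ a (saZ b v) = saZ (a * b) v.
Proof.
by apply: val_inj; rewrite /= scalerA rmorphM.
Qed.
Lemma saZ1 : left_id 1 saZ.
Proof. by move=> v; apply: val_inj; rewrite /= rmorph1 scale1r. Qed.
Lemma saZDr : right_distributive saZ +%R.
Proof. by move=> a u v; apply: val_inj; rewrite /= scalerDr. Qed.
Lemma saZDl v : {morph saZ^~ v : a b / a + b}.
Proof.
by move=> a b; apply: val_inj; rewrite /= rmorphD scalerDl.
Qed.

HB.instance Definition _ := GRing.Zmodule_isLmodule.Build R (SAmx n) saZA saZ1 saZDr saZDl.
End SA.

(** SA on morphisms: A |-> Cm A Cm^dagger *)
Lemma herm_conj m n (Cm : 'M[C]_(m, n)) (A : SAmx n) :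
  hermitian (Cm *m sa_val A *m adjmx Cm).
Proof.
by rewrite /hermitian !adjmxM adjmxK (eqP (sa_herm A)) mulmxA.
Qed.
Definition saMap m n (Cm : 'M[C]_(m, n)) (A : SAmx n) : SAmx m :=
  SAmk (herm_conj Cm A).

(* R_{>=0}-linear maps out of Pos(H) = {A | posmx A} (as functions on matrices,
   only their values on Pos(H) matter) *)
Definition nnlin_on n (W : lmodType R) (f : 'M[C]_n -> W) : Prop :=
  f 0 = 0 /\
  (forall A B, posmx A -> posmx B -> f (A + B) = f A + f B) /\
  (forall r A, 0 <= r -> posmx A -> f (rC r *: A) = r *: f A).

Definition rlin (V W : lmodType R) (g : V -> W) : Prop :=
  (forall u v, g (u + v) = g u + g v) /\ (forall r u, g (r *: u) = r *: g u).

Definition rlin_SA n (W : lmodType C) (f : SAmx n -> W) : Prop :=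
  (forall S T, f (S + T) = f S + f T) /\ (forall r S, f (r *: S) = rC r *: f S).

Definition clin (V W : lmodType C) (g : V -> W) : Prop :=
  (forall u v, g (u + v) = g u + g v) /\ (forall c u, g (c *: u) = c *: g u).

(** (V, eta) is a universal arrow from Pos(C^n) to the forgetful functor
    Vect_R -> Mod_{R>=0}, i.e. V = R(Pos(H)) with unit eta of a left adjoint R. *)
Definition PosUniversal n (V : lmodType R) (eta : 'M[C]_n -> V) : Prop :=
  nnlin_on eta /\
  forall (W : lmodType R) (f : 'M[C]_n -> W), nnlin_on f ->
    (exists g : V -> W, rlin g /\ forall A, posmx A -> g (eta A) = f A) /\
    (forall g1 g2 : V -> W, rlin g1 -> rlin g2 ->
       (forall A, posmx A -> g1 (eta A) = g2 (eta A)) -> g1 =1 g2).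

(** (V, eta) is a universal arrow from SA(C^n) to the forgetful functor
    Vect_C -> Vect_R, i.e. V = C(SA(H)) with unit eta of a left adjoint C. *)
Definition SAUniversal n (V : lmodType C) (eta : SAmx n -> V) : Prop :=
  rlin_SA eta /\
  forall (W : lmodType C) (f : SAmx n -> W), rlin_SA f ->
    (exists g : V -> W, clin g /\ forall S, g (eta S) = f S) /\
    (forall g1 g2 : V -> W, clin g1 -> clin g2 ->
       (forall S, g1 (eta S) = g2 (eta S)) -> g1 =1 g2).

End Defs.

(* Main.v *)
Require Import Defs.
From HB Require Import structures.
From mathcomp Require Import all_boot all_order all_algebra.
From mathcomp Require Import reals complex ring.
Import Order.TTheory GRing.Theory Num.Theory.
Local Open Scope ring_scope.


Section Helpers.
Variable R : realType.
Local Notation C := R[i].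
Local Notation rC := (real_complex R).

Lemma adjmxZ m n (c : C) (A : 'M[C]_(m,n)) : adjmx (c *: A) = Num.conj c *: adjmx A.
Proof. by apply/matrixP => i j; rewrite /adjmx !mxE rmorphM. Qed.

Lemma adjmx1 n : adjmx (1%:M : 'M[C]_n) = 1%:M.
Proof.
apply/matrixP => i j; rewrite /adjmx !mxE eq_sym.
by rewrite rmorph_nat.
Qed.

Lemma cV_ge0 k (y : 'cV[C]_k) : 0 <= (adjmx y *m y) 0 0.
Proof.
rewrite mxE; apply: sumr_ge0 => j _; rewrite /adjmx !mxE mulrC.
exact: mul_conjC_ge0.
Qed.

Lemma posmx_adjM m n (M : 'M[C]_(m,n)) : posmx (adjmx M *m M).
Proof.
move=> x; rewrite (_ : adjmx x *m (adjmx M *m M) *m x = adjmx (M *m x) *m (M *m x)).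
  exact: cV_ge0.
by rewrite adjmxM !mulmxA.
Qed.

Lemma posmx1 n : posmx (1%:M : 'M[C]_n).
Proof. by move=> x; rewrite mulmx1; exact: cV_ge0. Qed.

Lemma posmx0 n : posmx (0 : 'M[C]_n).
Proof. by move=> x; rewrite mulmx0 mul0mx mxE. Qed.

Lemma posmxD n (A B : 'M[C]_n) : posmx A -> posmx B -> posmx (A + B).
Proof. by move=> hA hB x; rewrite mulmxDr mulmxDl mxE; apply: addr_ge0. Qed.

Lemma posmxZ n r (A : 'M[C]_n) : 0 <= r -> posmx A -> posmx (rC r *: A).
Proof.
move=> hr hA x; rewrite -scalemxAr -scalemxAl mxE; apply: mulr_ge0 => //.
by rewrite ler0c.
Qed.

Lemma posmx_conj m n (Cm : 'M[C]_(m,n)) A : posmx A -> posmx (Cm *m A *m adjmx Cm).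
Proof.
move=> hA x.
rewrite (_ : adjmx x *m (Cm *m A *m adjmx Cm) *m x =
   adjmx (adjmx Cm *m x) *m A *m (adjmx Cm *m x)); first exact: hA.
by rewrite adjmxM adjmxK !mulmxA.
Qed.

Lemma half2 : rC (2^-1) = 2^-1.
Proof. by rewrite fmorphV rmorph_nat. Qed.

Definition PP {n} (S : 'M[C]_n) := rC (2^-1) *: ((S + 1%:M) *m (S + 1%:M)).
Definition QQ {n} (S : 'M[C]_n) := rC (2^-1) *: (S *m S + 1%:M).

Lemma PQ_pos n (S : SAmx R n) : posmx (PP S) /\ posmx (QQ S).
Proof.
have hS := eqP (sa_herm S).
have h2 : 0 <= (2^-1 : R) by rewrite invr_ge0.
split; apply: posmxZ => //.
  have e : adjmx (sa_val S + 1%:M) = (sa_val S + 1%:M) by rewrite adjmxD adjmx1 hS.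
  rewrite -{1}e; exact: posmx_adjM.
apply: posmxD; last exact: posmx1.
by rewrite -{1}hS; exact: posmx_adjM.
Qed.

Lemma PQ_sub n (S : 'M[C]_n) : PP S - QQ S = S.
Proof.
rewrite /PP /QQ -scalerBr mulmxDl !mulmxDr mulmx1 mul1mx mul1mx.
have -> : S *m S + S + (S + 1%:M) - (S *m S + 1%:M) = S + S.
  by apply/eqP; rewrite subr_eq; apply/eqP; rewrite [RHS]addrACA (addrC S (S *m S)).
by rewrite -mulr2n -scaler_nat scalerA half2 mulVf ?scale1r // pnatr_eq0.
Qed.

End Helpers.
Arguments PP {R n}. Arguments QQ {R n}.
Arguments PQ_pos {R n}. Arguments PQ_sub {R n}.

Section P1.
Variable R : realType.
Local Notation C := R[i].
Local Notation rC := (real_complex R).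

Lemma rlin_opp (V W : lmodType R) (g : V -> W) : rlin g -> forall v, g (- v) = - g v.
Proof. by case=> _ gZ v; rewrite -scaleN1r gZ scaleN1r. Qed.

Lemma part1 n (V : lmodType R) (eta : 'M[C]_n -> V) :
  PosUniversal eta ->
  forall phi : V -> SAmx R n, rlin phi ->
    (forall A, posmx A -> sa_val (phi (eta A)) = A) -> bijective phi.
Proof.
case=> etaNN Univ phi phiL phiE.
have [e0 [eD eZ]] := etaNN.
pose g (S : SAmx R n) : V := eta (PP (sa_val S)) - eta (QQ (sa_val S)).
have wd : forall P Q P' Q', posmx P -> posmx Q -> posmx P' -> posmx Q' ->
    P - Q = P' - Q' -> eta P - eta Q = eta P' - eta Q'.
  move=> P Q P' Q' hP hQ hP' hQ' h.
  have h2 : P + Q' = P' + Q.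
    by rewrite -[P](subrK Q) h addrAC subrK.
  have h3 : eta P + eta Q' = eta P' + eta Q by rewrite -eD // -eD // h2.
  by apply/eqP; rewrite subr_eq addrAC -h3 addrK.
have gdec : forall S P Q, posmx P -> posmx Q -> sa_val S = P - Q -> g S = eta P - eta Q.
  move=> S P Q hP hQ hS; have [hPP hQQ] := PQ_pos S.
  by apply: wd => //; rewrite PQ_sub hS.
have gL : rlin g.
  split.
    move=> S T; have [hPS hQS] := PQ_pos S; have [hPT hQT] := PQ_pos T.
    rewrite (gdec (S + T) (PP (sa_val S) + PP (sa_val T)) (QQ (sa_val S) + QQ (sa_val T))).
    - by rewrite !eD // opprD addrACA.
    - exact: posmxD.
    - exact: posmxD.
    - by rewrite /= opprD addrACA !PQ_sub.
  move=> r S; have [hPS hQS] := PQ_pos S.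
  have [hr|hr] := leP 0 r.
    rewrite (gdec (r *: S) (rC r *: PP (sa_val S)) (rC r *: QQ (sa_val S))).
    - by rewrite (eZ r (PP _)) // (eZ r (QQ _)) // -scalerBr.
    - exact: posmxZ.
    - exact: posmxZ.
    - by rewrite /= -scalerBr PQ_sub.
  have hr' : 0 <= - r by rewrite oppr_ge0 ltW.
  rewrite (gdec (r *: S) (rC (- r) *: QQ (sa_val S)) (rC (- r) *: PP (sa_val S))).
  - by rewrite (eZ _ (QQ _)) // (eZ _ (PP _)) // -scalerBr scaleNr -scalerN opprB.
  - exact: posmxZ.
  - exact: posmxZ.
  - by rewrite /= -scalerBr rmorphN scaleNr -scalerN opprB PQ_sub.
exists g.
  move=> v.
  have [_ U] := Univ V eta etaNN.
  have hL : rlin (g \o phi).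
    have [gD gZ] := gL; have [pD pZ] := phiL.
    by split=> [u w|r u]; rewrite /= ?pD ?gD ?pZ ?gZ.
  have hid : rlin (@id V) by [].
  apply: (U (g \o phi) id hL hid) => A hA /=.
  rewrite (gdec _ A 0) //; first by rewrite e0 subr0.
  - exact: posmx0.
  - by rewrite subr0 phiE.
move=> S; apply: val_inj => /=.
have [hP hQ] := PQ_pos S.
by rewrite /g phiL.1 rlin_opp //= !phiE // PQ_sub.
Qed.
End P1.

Section P2.
Variable R : realType.
Local Notation C := R[i].
Local Notation rC := (real_complex R).
Variable n : nat.

Definition H1m (M : 'M[C]_n) := rC (2^-1) *: (M + adjmx M).
Definition H2m (M : 'M[C]_n) := rC (2^-1) *: ('i *: (adjmx M - M)).

Lemma herm1 (M : 'M[C]_n) : Defs.hermitian (H1m M).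
Proof. by rewrite /Defs.hermitian /H1m adjmxZr adjmxD adjmxK addrC. Qed.
Lemma herm2 (M : 'M[C]_n) : Defs.hermitian (H2m M).
Proof.
rewrite /Defs.hermitian /H2m adjmxZr adjmxZ adjmxD adjmxN adjmxK conjCi.
by rewrite scaleNr -scalerN opprB.
Qed.
Definition H1 M : SAmx R n := SAmk (herm1 M).
Definition H2 M : SAmx R n := SAmk (herm2 M).

Lemma iiN (x : C) : 'i * ('i * x) = - x.
Proof. by rewrite mulrA -expr2 sqrCi mulN1r. Qed.

Lemma H12 M : H1m M + 'i *: H2m M = M.
Proof.
apply/matrixP => i j; rewrite /H1m /H2m !mxE half2.
by rewrite mulrCA iiN; field.
Qed.

Lemma H1D M N : H1 (M + N) = H1 M + H1 N.
Proof. by apply: val_inj; rewrite /= /H1m adjmxD -scalerDr addrACA. Qed.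
Lemma H2D M N : H2 (M + N) = H2 M + H2 N.
Proof.
by apply: val_inj; rewrite /= /H2m adjmxD -scalerDr -scalerDr opprD addrACA.
Qed.
Lemma H1Zr r M : H1 (rC r *: M) = r *: H1 M.
Proof.
by apply: val_inj; rewrite /= /H1m adjmxZr -scalerDr !scalerA mulrC.
Qed.
Lemma H2Zr r M : H2 (rC r *: M) = r *: H2 M.
Proof.
apply: val_inj; rewrite /= /H2m adjmxZr -scalerBr !scalerA; congr (_ *: _); ring.
Qed.
Lemma H1Zi M : H1 ('i *: M) = - H2 M.
Proof.
apply: val_inj; rewrite /= /H1m /H2m adjmxZ conjCi.
apply/matrixP => i j; rewrite !mxE; ring.
Qed.
Lemma H2Zi M : H2 ('i *: M) = H1 M.
Proof.
apply: val_inj; rewrite /= /H2m /H1m adjmxZ conjCi.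
apply/matrixP => i j; rewrite !mxE.
rewrite (_ : 'i * (- 'i * (M j i)^* - 'i * M i j) = - ('i * ('i * ((M j i)^* + M i j)))); last by ring.
by rewrite iiN opprK addrC.
Qed.

Lemma part2 (V : lmodType C) (eta : SAmx R n -> V) :
  SAUniversal eta ->
  forall psi : V -> 'M[C]_n, clin psi ->
    (forall S, psi (eta S) = sa_val S) -> bijective psi.
Proof.
case=> etaL Univ psi [pD pZ] psiE.
have [eD eZ] := etaL.
have eN : forall S, eta (- S) = - eta S.
  by move=> S; rewrite -(scaleN1r S) eZ rmorphN1 scaleN1r.
have e0 : eta 0 = 0.
  by rewrite -(scale0r (0 : SAmx R n)) eZ rmorph0 scale0r.
pose g (M : 'M[C]_n) : V := eta (H1 M) + 'i *: eta (H2 M).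
have gD : forall M N, g (M + N) = g M + g N.
  by move=> M N; rewrite /g H1D H2D !eD scalerDr addrACA.
have gZr : forall r M, g (rC r *: M) = rC r *: g M.
  by move=> r M; rewrite /g H1Zr H2Zr !eZ scalerDr !scalerA mulrC.
have gZi : forall M, g ('i *: M) = 'i *: g M.
  move=> M; rewrite /g H1Zi H2Zi eN scalerDr scalerA -expr2 sqrCi scaleN1r.
  by rewrite addrC.
have gL : clin g.
  split => // c M.
  rewrite [c]complexE scalerDl -scalerA gD gZr gZi gZr.
  by rewrite scalerDl scalerA.
exists g.
  move=> v.
  have [_ U] := Univ V eta etaL.
  have hL : clin (g \o psi).
    have [gD' gZ'] := gL.
    by split=> [u w|c u]; rewrite /= ?pD ?gD' ?pZ ?gZ'.
  have hid : clin (@id V) by [].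
  apply: (U (g \o psi) id hL hid) => S /=.
  rewrite psiE /g.
  have -> : H1 (sa_val S) = S.
    apply: val_inj; rewrite /= /H1m (eqP (sa_herm S)) half2.
    by apply/matrixP => i j; rewrite !mxE; field.
  have -> : H2 (sa_val S) = 0.
    by apply: val_inj; rewrite /= /H2m (eqP (sa_herm S)) subrr !scaler0.
  by rewrite e0 scaler0 addr0.
move=> M; rewrite /g pD pZ !psiE; exact: H12.
Qed.
End P2.
Arguments part1 {R n V eta}.
Arguments part2 {R n V eta}.

Theorem theorem3p3 (R : realType) :
  (* (1) for any left adjoint R with unit eta at Pos(C^n), the transpose phi of
         the inclusion Pos(C^n) -> SA(C^n) is an isomorphism R(Pos(C^n)) ~= SA(C^n) *)
  (forall (n : nat) (V : lmodType R) (eta : 'M[R[i]]_n -> V),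
     PosUniversal eta ->
     forall phi : V -> SAmx R n, rlin phi ->
       (forall A, posmx A -> sa_val (phi (eta A)) = A) ->
       bijective phi)
  /\
  (* (2) for any left adjoint C with unit eta at SA(C^n), the transpose psi of
         the inclusion SA(C^n) -> B(C^n) is an isomorphism C(SA(C^n)) ~= B(C^n) *)
  (forall (n : nat) (V : lmodType R[i]) (eta : SAmx R n -> V),
     SAUniversal eta ->
     forall psi : V -> 'M[R[i]]_n, clin psi ->
       (forall S, psi (eta S) = sa_val S) ->
       bijective psi)
  /\
  (* (3) naturality of phi on FdHilb: phi_m o R(Pos(Cm)) = SA(Cm) o phi_n *)
  (forall (n m : nat) (Cm : 'M[R[i]]_(m, n))
          (Vn : lmodType R) (etan : 'M[R[i]]_n -> Vn)
          (Vm : lmodType R) (etam : 'M[R[i]]_m -> Vm),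
     PosUniversal etan -> PosUniversal etam ->
     forall (phin : Vn -> SAmx R n) (phim : Vm -> SAmx R m),
       rlin phin -> (forall A, posmx A -> sa_val (phin (etan A)) = A) ->
       rlin phim -> (forall A, posmx A -> sa_val (phim (etam A)) = A) ->
     forall h : Vn -> Vm, rlin h ->
       (forall A, posmx A -> h (etan A) = etam (Cm *m A *m adjmx Cm)) ->
       forall v, phim (h v) = saMap Cm (phin v))
  /\
  (* (4) naturality of psi on FdHilb: psi_m o C(SA(Cm)) = B(Cm) o psi_n *)
  (forall (n m : nat) (Cm : 'M[R[i]]_(m, n))
          (Vn : lmodType R[i]) (etan : SAmx R n -> Vn)
          (Vm : lmodType R[i]) (etam : SAmx R m -> Vm),
     SAUniversal etan -> SAUniversal etam ->
     forall (psin : Vn -> 'M[R[i]]_n) (psim : Vm -> 'M[R[i]]_m),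
       clin psin -> (forall S, psin (etan S) = sa_val S) ->
       clin psim -> (forall S, psim (etam S) = sa_val S) ->
     forall h : Vn -> Vm, clin h ->
       (forall S, h (etan S) = etam (saMap Cm S)) ->
       forall v, psim (h v) = Cm *m psin v *m adjmx Cm).
Proof.
split; first by move=> n V eta PU phi hL hE; exact: (part1 PU phi hL hE).
split; first by move=> n V eta SU psi hL hE; exact: (part2 SU psi hL hE).
split.
  move=> n m Cm Vn etan Vm etam PUn PUm phin phim hn hnE hm hmE h hh hE.
  case: PUn => etaNN Univ.
  have z : nnlin_on (fun _ : 'M[R[i]]_n => (0 : SAmx R m)).
    by split=> //; split=> *; rewrite ?addr0 ?scaler0.
  have [_ U] := Univ _ _ z.
  have L1 : rlin (phim \o h).
    have [a b] := hm; have [c d] := hh.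
    by split=> [u w|r u]; rewrite /= ?c ?a ?d ?b.
  have L2 : rlin (saMap Cm \o phin).
    have [a b] := hn.
    split=> [u w|r u]; apply: val_inj; rewrite /= ?a ?b /=.
      by rewrite mulmxDr mulmxDl.
    by rewrite -scalemxAr -scalemxAl.
  apply: (U _ _ L1 L2) => A hA /=.
  apply: val_inj; rewrite /= hE // hmE ?hnE //.
  exact: posmx_conj.
move=> n m Cm Vn etan Vm etam SUn SUm psin psim hn hnE hm hmE h hh hE.
case: SUn => etaL Univ.
have z : rlin_SA (fun _ : SAmx R n => (0 : 'M[R[i]]_m)).
  by split=> *; rewrite ?addr0 ?scaler0.
have [_ U] := Univ _ _ z.
have L1 : clin (psim \o h).
  have [a b] := hm; have [c d] := hh.
  by split=> [u w|r u]; rewrite /= ?c ?a ?d ?b.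
have L2 : clin (fun v => Cm *m psin v *m adjmx Cm).
  have [a b] := hn.
  split=> [u w|r u]; rewrite ?a ?b.
    by rewrite mulmxDr mulmxDl.
  by rewrite -scalemxAr -scalemxAl.
apply: (U _ _ L1 L2) => S /=.
by rewrite hE hmE hnE.
Qed.
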